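(* Suppose $S\subseteq\mathbb{N}^{\mathbb{N}}$ is defined by a sentence $\exists x\,\forall y\,\phi$ of $\mathscr{L}_{\max}$, where $\phi$ is quantifier-free. Then $S$ is overguessable.
   Context: $\mathbb{N}^{<\mathbb{N}}$ denotes the finite sequences of naturals. $S\subseteq\mathbb{N}^{\mathbb{N}}$ is overguessable if there is a function $\mu:\mathbb{N}^{<\mathbb{N}}\to\mathbb{N}\cup\{\infty\}$ such that (1) for every $f\in S$, the values $\mu(f(0),\ldots,f(n))$ are bounded by some finite number for all sufficiently large $n$; and (2) for every $f\notin S$, $\mu(f(0),\ldots,f(n))\to\infty$ as $n\to\infty$. The language $\mathscr{L}_{\max}$ is a first-order language extended with ellipses: constant symbols $\mathbf{n}$ (also $\bar n$) for each $n\in\mathbb{N}$; an $n$-ary function symbol $\tilde w$ for each $w:\mathbb{N}^n\to\mathbb{N}$ ($n>0$); an $n$-ary predicate symbol $\tilde p$ for each $p\subseteq\mathbb{N}^n$ ($n>0$); an $\mathbb{N}^{<\mathbb{N}}$-ary function symbol $\tilde G$ for each $G:\mathbb{N}^{<\mathbb{N}}\to\mathbb{N}$ (applicable to any finite number of arguments); a unary function symbol $\mathbf{f}$; and a symbol $\cdots_x$ for each variable $x$. Besides the usual terms, for $\mathbb{N}^{<\mathbb{N}}$-ary $G$, terms $u,v$ and variable $x$, $G(u(\mathbf{0}),\cdots_x,u(v))$ is a term with free variables $(FV(u)\setminus\{x\})\cup FV(v)$. Formulas are built as usual. For $f:\mathbb{N}\to\mathbb{N}$, $\mathscr{M}_f$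 is the structure on $\mathbb{N}$ interpreting every symbol as the object it names and $\mathbf{f}$ as $f$; terms are evaluated as usual, plus $G(u(\mathbf{0}),\cdots_x,u(v))^{s}=G\big(u(x|\mathbf{0})^{s},\ldots,u(x|\overline{v^{s}})^{s}\big)$ under an assignment $s$, where $u(x|c)$ is substitution of the constant $c$ for $x$ in $u$. A sentence $\phi$ defines $S\subseteq\mathbb{N}^{\mathbb{N}}$ if for every $f:\mathbb{N}\to\mathbb{N}$, $\mathscr{M}_f\models\phi$ iff $f\in S$. *)

(* Defs.v *)
From mathcomp Require Import all_boot.
Set Implicit Arguments. Unset Strict Implicit. Unset Printing Implicit Defensive.

Inductive term : Type :=
| TVar  : nat -> term
| TConst : nat -> term
| TApp  : forall n : nat, (('I_n.+1 -> nat) -> nat) ->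
            ('I_n.+1 -> term) -> term
| TG    : (seq nat -> nat) -> forall n : nat, ('I_n -> term) -> term
| Tf    : term -> term
| TEll  : (seq nat -> nat) -> nat -> term -> term -> term. (* G(u(0),...x,u(v)) : TEll G x u v *)

Inductive formula : Type :=
| FEq   : term -> term -> formula
| FPred : forall n : nat, (('I_n.+1 -> nat) -> Prop) ->
            ('I_n.+1 -> term) -> formula
| FNot  : formula -> formula
| FAnd  : formula -> formula -> formula
| FOr   : formula -> formula -> formula
| FImp  : formula -> formula -> formula
| FAll  : nat -> formula -> formula
| FEx   : nat -> formula -> formula.

Fixpoint free_t (t : term) (z : nat) : bool :=
  match t with
  | TVar k => k == z
  | TConst _ => false
  | TApp n _ args => [exists i, free_t (args i) z]
  | TG _ n args => [exists i, free_t (args i) z]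
  | Tf u => free_t u z
  | TEll _ x u v => ((z != x) && free_t u z) || free_t v z
  end.

Fixpoint free_f (phi : formula) (z : nat) : bool :=
  match phi with
  | FEq a b => free_t a z || free_t b z
  | FPred n _ args => [exists i, free_t (args i) z]
  | FNot p => free_f p z
  | FAnd p q | FOr p q | FImp p q => free_f p z || free_f q z
  | FAll x p | FEx x p => (z != x) && free_f p z
  end.

Definition sentence (phi : formula) : Prop := forall z, ~~ free_f phi z.

Fixpoint qfree (phi : formula) : bool :=
  match phi with
  | FEq _ _ | FPred _ _ _ => true
  | FNot p => qfree p
  | FAnd p q | FOr p q | FImp p q => qfree p && qfree q
  | FAll _ _ | FEx _ _ => false
  end.

Definition upd (s : nat -> nat) (x c : nat) : nat -> nat :=
  fun k => if k == x then c else s k.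

(* For the ellipsis term, the value of the substituted
   term u(x|c) under s is computed as the value of u under s[x:=c]
   (the standard substitution lemma, c being a closed constant). *)
Fixpoint eval (f : nat -> nat) (t : term) (s : nat -> nat) : nat :=
  match t with
  | TVar k => s k
  | TConst n => n
  | TApp n w args => w (fun i => eval f (args i) s)
  | TG G n args => G [seq eval f (args i) s | i <- enum 'I_n]
  | Tf u => f (eval f u s)
  | TEll G x u v =>
      G [seq eval f u (upd s x c) | c <- iota 0 (eval f v s).+1]
  end.

Fixpoint sat (f : nat -> nat) (phi : formula) (s : nat -> nat) : Prop :=
  match phi with
  | FEq a b => eval f a s = eval f b s
  | FPred n p args => p (fun i => eval f (args i) s)
  | FNot p => ~ sat f p s
  | FAnd p q => sat f p s /\ sat f q s
  | FOr p q => sat f p s \/ sat f q s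
  | FImp p q => sat f p s -> sat f q s
  | FAll x p => forall c, sat f p (upd s x c)
  | FEx x p => exists c, sat f p (upd s x c)
  end.

(* M_f |= phi for a sentence phi (assignment irrelevant; we use the zero one) *)
Definition models (f : nat -> nat) (phi : formula) : Prop := sat f phi (fun _ => 0).

Definition defines (phi : formula) (S : (nat -> nat) -> Prop) : Prop :=
  sentence phi /\ forall f, models f phi <-> S f.

(* N ∪ {∞} as option nat, None = ∞ *)
Definition initseg (f : nat -> nat) (n : nat) : seq nat := mkseq f n.+1.

Definition overguessable (S : (nat -> nat) -> Prop) : Prop :=
  exists mu : seq nat -> option nat,
    (forall f, S f -> exists B N, forall n, N <= n ->
        exists k, mu (initseg f n) = Some k /\ k <= B) /\
    (forall f, ~ S f -> forall B, exists N, forall n, N <= n ->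
        match mu (initseg f n) with None => true | Some k => B < k end).

(* Main.v *)
Require Import Defs.
From Stdlib Require Import ClassicalEpsilon FunctionalExtensionality Classical.
From mathcomp Require Import all_boot.

Set Implicit Arguments. Unset Strict Implicit.

Definition agree (g f : nat -> nat) N := forall i, i < N -> g i = f i.

Lemma agree_mono g f N M : N <= M -> agree g f M -> agree g f N.
Proof. move=> le H i li; apply: H; exact: leq_trans li le. Qed.

Definition good f t s N := forall g, agree g f N -> eval g t s = eval f t s.

Lemma good_mono f t s N M : N <= M -> good f t s N -> good f t s M.
Proof. move=> le H g Hg; apply: H; exact: agree_mono le Hg. Qed.

Lemma fin_bound (I : finType) (P : I -> nat -> Prop) :
  (forall i N M, N <= M -> P i N -> P i M) ->
  (forall i, exists N, P i N) -> exists N, forall i, P i N.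
Proof.
move=> mono H.
pose F i := proj1_sig (constructive_indefinite_description _ (H i)).
exists (\max_i F i) => i.
apply: (mono i (F i)); first exact: leq_bigmax.
exact: (proj2_sig (constructive_indefinite_description _ (H i))).
Qed.

Lemma nat_bound (P : nat -> nat -> Prop) :
  (forall i N M, N <= M -> P i N -> P i M) ->
  (forall i, exists N, P i N) -> forall V, exists N, forall c, c <= V -> P c N.
Proof.
move=> mono H; elim => [|V IH].
  have [N HN] := H 0; exists N => c; rewrite leqn0 => /eqP->; exact: HN.
have [N1 H1] := IH; have [N2 H2] := H V.+1; exists (maxn N1 N2) => c.
rewrite leq_eqVlt => /orP[/eqP->|hc].
  apply: (mono _ N2); [exact: leq_maxr|exact: H2].
apply: (mono _ N1); [exact: leq_maxl|apply: H1; exact: hc].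
Qed.

Lemma eval_cont f t : forall s, exists N, good f t s N.
Proof.
elim: t => [k|n|n w args IH|G n args IH|u IH|G x u IHu v IHv] s.
- by exists 0.
- by exists 0.
- have [N HN] := fin_bound (P := fun i N => good f (args i) s N)
     (fun i N M => @good_mono f (args i) s N M) (fun i => IH i s).
  exists N => g Hg /=; congr (w _); apply: functional_extensionality => i.
  exact: HN i g Hg.
- have [N HN] := fin_bound (P := fun i N => good f (args i) s N)
     (fun i N M => @good_mono f (args i) s N M) (fun i => IH i s).
  exists N => g Hg /=; congr (G _); apply: eq_map => i.
  exact: HN i g Hg.
- have [N HN] := IH s.
  exists (maxn N (eval f u s).+1) => g Hg /=.
  rewrite (HN g); last exact: agree_mono (leq_maxl _ _) Hg.
  apply: Hg; exact: leq_maxr.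
- have [Nv HNv] := IHv s.
  have [Nu HNu] := nat_bound (P := fun c N => good f u (upd s x c) N)
     (fun c N M => @good_mono f u (upd s x c) N M) (fun c => IHu (upd s x c)) (eval f v s).
  exists (maxn Nv Nu) => g Hg /=.
  rewrite (HNv g); last exact: agree_mono (leq_maxl _ _) Hg.
  change (G [seq eval g u (upd s x c) | c <- iota 0 (eval f v s).+1] = G [seq eval f u (upd s x c) | c <- iota 0 (eval f v s).+1]).
  congr (G _); apply/eq_in_map => c; rewrite mem_iota => /andP[_ hc].
  apply: HNu; last exact: agree_mono (leq_maxr _ _) Hg.
  by rewrite add0n ltnS in hc.
Qed.

Lemma sat_cont f phi : qfree phi -> forall s, exists N, forall g, agree g f N ->
  (sat g phi s <-> sat f phi s).
Proof.
elim: phi => [a b|n p args|p IH|p IHp q IHq|p IHp q IHq|p IHp q IHq|z p IH|z p IH]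
  //= hq s.
- have [Na Ha] := eval_cont f a s; have [Nb Hb] := eval_cont f b s.
  exists (maxn Na Nb) => g Hg.
  rewrite (Ha g); last exact: agree_mono (leq_maxl _ _) Hg.
  rewrite (Hb g); last exact: agree_mono (leq_maxr _ _) Hg. by [].
- have [N HN] := fin_bound (P := fun i N => good f (args i) s N)
     (fun i N M => @good_mono f (args i) s N M) (fun i => eval_cont f (args i) s).
  exists N => g Hg.
  have ->: (fun i => eval g (args i) s) = (fun i => eval f (args i) s).
    by apply: functional_extensionality => i; exact: HN i g Hg.
  by [].
- have [N HN] := IH hq s; exists N => g Hg; have := HN g Hg; tauto.
- move/andP: hq => [h1 h2]; have [N1 H1] := IHp h1 s; have [N2 H2] := IHq h2 s.
  exists (maxn N1 N2) => g Hg.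
  have := H1 g (agree_mono (leq_maxl _ _) Hg); have := H2 g (agree_mono (leq_maxr _ _) Hg).
  tauto.
- move/andP: hq => [h1 h2]; have [N1 H1] := IHp h1 s; have [N2 H2] := IHq h2 s.
  exists (maxn N1 N2) => g Hg.
  have := H1 g (agree_mono (leq_maxl _ _) Hg); have := H2 g (agree_mono (leq_maxr _ _) Hg).
  tauto.
- move/andP: hq => [h1 h2]; have [N1 H1] := IHp h1 s; have [N2 H2] := IHq h2 s.
  exists (maxn N1 N2) => g Hg.
  have := H1 g (agree_mono (leq_maxl _ _) Hg); have := H2 g (agree_mono (leq_maxr _ _) Hg).
  tauto.
Qed.

Definition pb (P : Prop) : bool := if excluded_middle_informative P then true else false.

Lemma pbP (P : Prop) : pb P <-> P.
Proof. by rewrite /pb; case: excluded_middle_informative. Qed.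

Theorem lemma4p4 (S : (nat -> nat) -> Prop) (x y : nat) (phi : formula) :
  qfree phi -> defines (FEx x (FAll y phi)) S -> overguessable S.
Proof.
move=> hq [_ hdef].
pose sab a b := upd (upd (fun _ => 0) x a) y b.
pose refuted (sg : seq nat) a b := forall g, (forall i, i < size sg -> g i = nth 0 sg i) ->
   ~ sat g phi (sab a b).
pose P (sg : seq nat) a := pb (forall b, b <= size sg -> ~ refuted sg a b).
pose mu (sg : seq nat) := Some (find (P sg) (iota 0 (size sg).+1)).
exists mu; split.
- move=> f /hdef [a Ha].
  exists a, a => n le_an; exists (find (P (initseg f n)) (iota 0 (size (initseg f n)).+1)).
  split => //.
  rewrite leqNgt; apply/negP => lt.
  have := before_find 0 lt; rewrite nth_iota; last first.
    by rewrite size_mkseq ltnS; apply: (leq_trans le_an).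
  rewrite add0n => /negbT/negP; apply; apply/pbP => b _ R.
  apply: (R f); last exact: Ha.
  by move=> i; rewrite size_mkseq => hi; rewrite nth_mkseq.
- move=> f nS B.
  have Hb : forall a, exists b, ~ sat f phi (sab a b).
    move=> a; apply: NNPP => H; apply: nS; apply/hdef; exists a => b.
    apply: NNPP => Hn; apply: H; by exists b.
  have Ha : forall a, exists M, forall n, M <= n -> ~~ P (initseg f n) a.
    move=> a; have [b Hnb] := Hb a.
    have [N HN] := @sat_cont f phi hq (sab a b).
    exists (maxn b N) => n hn; apply/negP => /pbP H.
    apply: (H b).
      rewrite size_mkseq; apply: leqW; exact: leq_trans (leq_maxl _ _) hn.
    move=> g Hg Hs; apply: Hnb; apply/(HN g) => // i hi.
    rewrite Hg ?nth_mkseq //; first (apply: leq_trans hi _; apply: leqW; exact: leq_trans (leq_maxr _ _) hn).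
    rewrite size_mkseq; apply: leq_trans hi _; apply: leqW; exact: leq_trans (leq_maxr _ _) hn.
  have [M HM] := nat_bound (P := fun a M => forall n, M <= n -> ~~ P (initseg f n) a)
    (fun a N M le H n hn => H n (leq_trans le hn)) Ha B.
  exists (maxn M B) => n hn; rewrite /mu.
  rewrite ltnNge; apply/negP => le.
  have hlt : find (P (initseg f n)) (iota 0 (size (initseg f n)).+1) <
             size (iota 0 (size (initseg f n)).+1).
    apply: (leq_ltn_trans le); rewrite size_iota size_mkseq.
    rewrite ltnS; apply: leqW; exact: leq_trans (leq_maxr _ _) hn.
  have := nth_find 0 (eq_ind_r is_true hlt (has_find _ _)).
  rewrite nth_iota; last by rewrite size_iota in hlt.
  rewrite add0n; apply/negP; apply: (HM _ le); exact: leq_trans (leq_maxl _ _) hn.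
Qed.
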